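(* Let $\mathfrak{g}$ be a three-dimensional Lie algebra, and fix a basis of $\mathfrak{g}$ (identifying $\mathfrak{g}\cong\mathbb{R}^3$). Let \[ F := \left\{ \begin{pmatrix} x_{11} & 0 & 0 \\ x_{21} & x_{22} & 0 \\ x_{31} & 0 & x_{22} \end{pmatrix} \;\middle|\; x_{11}, x_{22} > 0 \right\}. \] If $F \subset \mathbb{R}^\times \mathrm{Aut}(\mathfrak{g})$, then \[ L' := \left\{ \begin{pmatrix} 1 & 0 & 0 \\ 0 & 1 & 0 \\ 0 & a_{32} & a_{33} \end{pmatrix} \;\middle|\; a_{33} > 0 \right\} \] is a set of representatives of $\mathfrak{PM}$, i.e. $\mathfrak{PM} = \{ [h.\langle\cdot,\cdot\rangle_0] \mid h \in L' \}$.
   Context: $\mathbb{R}^\times$ denotes the nonzero scalar maps on $\mathfrak{g}$ and $\mathrm{Aut}(\mathfrak{g})$ the automorphism group. $\mathrm{GL}_3(\mathbb{R})$ acts on inner products by $g.\langle\cdot,\cdot\rangle := \langle g^{-1}\cdot, g^{-1}\cdot\rangle$; $\langle\cdot,\cdot\rangle_0$ is the inner product making the canonical basis $\{e_1,e_2,e_3\}$ orthonormal. Two inner products are isometric up to scaling if $\langle\cdot,\cdot\rangle_1 = k\langle f\cdot, f\cdot\rangle_2$ for some $k>0$ and automorphism $f$; $[\cdot]$ denotes the equivalence class, and $\mathfrak{PM}$ is the set of all equivalence classes of inner products on $\mathfrak{g}$ (the moduli space of left-invariant Riemannian metrics). *)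

(* Defs.v *)
From HB Require Import structures.
From mathcomp Require Import all_boot all_order all_algebra.
From mathcomp Require Import reals.
Set Implicit Arguments. Unset Strict Implicit. Unset Printing Implicit Defensive.
Import Order.TTheory GRing.Theory Num.Theory.
Local Open Scope ring_scope.

(* g is identified with R^3 (column vectors) via the fixed basis;
   a Lie bracket is a bilinear, alternating map satisfying Jacobi. *)
Definition is_lie_bracket (R : realType)
  (br : 'cV[R]_3 -> 'cV[R]_3 -> 'cV[R]_3) : Prop :=
  [/\ (forall (a : R) x y z, br (a *: x + y) z = a *: br x z + br y z),
      (forall (a : R) x y z, br z (a *: x + y) = a *: br z x + br z y),
      (forall x, br x x = 0) &
      (forall x y z, br x (br y z) + br y (br z x) + br z (br x y) = 0)].

Definition is_aut (R : realType) (br : 'cV[R]_3 -> 'cV[R]_3 -> 'cV[R]_3)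
  (f : 'M[R]_3) : Prop :=
  f \in unitmx /\ forall x y, f *m br x y = br (f *m x) (f *m y).

Definition in_scalar_aut (R : realType) (br : 'cV[R]_3 -> 'cV[R]_3 -> 'cV[R]_3)
  (X : 'M[R]_3) : Prop :=
  exists (c : R) (f : 'M[R]_3), c != 0 /\ is_aut br f /\ X = c *: f.

(* Inner products on R^3, represented by their Gram matrices w.r.t. the
   canonical basis: <x, y> = x^T S y. *)
Definition inner_product (R : realType) (S : 'M[R]_3) : Prop :=
  S^T = S /\ forall x : 'cV[R]_3, x != 0 -> 0 < (x^T *m S *m x) 0 0.

Definition ip0 (R : realType) : 'M[R]_3 := 1%:M.

(* g.<.,.> := <g^-1 ., g^-1 .>  (Gram matrix (g^-1)^T S g^-1) *)
Definition act (R : realType) (g S : 'M[R]_3) : 'M[R]_3 :=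
  (invmx g)^T *m S *m invmx g.

Definition isom_up_to_scaling (R : realType)
  (br : 'cV[R]_3 -> 'cV[R]_3 -> 'cV[R]_3) (S1 S2 : 'M[R]_3) : Prop :=
  exists (k : R) (f : 'M[R]_3), 0 < k /\ is_aut br f /\
    S1 = k *: (f^T *m S2 *m f).

Definition mx3 (R : realType) (a11 a12 a13 a21 a22 a23 a31 a32 a33 : R)
  : 'M[R]_3 :=
  \matrix_(i < 3, j < 3)
    nth 0 (nth [::] [:: [:: a11; a12; a13]; [:: a21; a22; a23];
                        [:: a31; a32; a33]] i) j.

Definition in_F (R : realType) (X : 'M[R]_3) : Prop :=
  exists x11 x21 x22 x31 : R, 0 < x11 /\ 0 < x22 /\
    X = mx3 x11 0 0 x21 x22 0 x31 0 x22.

Definition in_Lprime (R : realType) (h : 'M[R]_3) : Prop :=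
  exists a32 a33 : R, 0 < a33 /\ h = mx3 1 0 0 0 1 0 0 a32 a33.

(* Main.v *)
Require Import Defs.
From HB Require Import structures.
From mathcomp Require Import all_boot all_order all_algebra.
From mathcomp Require Import reals ring lra.
Import Order.TTheory GRing.Theory Num.Theory.
Set Implicit Arguments.
Local Open Scope ring_scope.

Section Aux.
Variable R : realType.

Definition o0 : 'I_3 := @Ordinal 3 0 isT.
Definition o1 : 'I_3 := @Ordinal 3 1 isT.
Definition o2 : 'I_3 := @Ordinal 3 2 isT.

Lemma ord3 (i : 'I_3) : i = o0 \/ i = o1 \/ i = o2.
Proof.
case: i => [[|[|[|m]]] Hm]; [left|right;left|right;right|by []]; exact: val_inj.
Qed.

Definition col3 (a b c : R) : 'cV[R]_3 :=
  \matrix_(i < 3, j < 1) nth 0 [:: a; b; c] i.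

Lemma mx3_eta (A : 'M[R]_3) : A = mx3 (A o0 o0) (A o0 o1) (A o0 o2)
  (A o1 o0) (A o1 o1) (A o1 o2) (A o2 o0) (A o2 o1) (A o2 o2).
Proof.
apply/matrixP => i j; rewrite mxE.
by have [->|[->|->]] := ord3 i; have [->|[->|->]] := ord3 j.
Qed.

Lemma col3_eta (x : 'cV[R]_3) : x = col3 (x o0 0) (x o1 0) (x o2 0).
Proof.
apply/matrixP => i j; rewrite mxE.
have -> : j = 0 by apply: val_inj; case: j => [[|]].
by have [->|[->|->]] := ord3 i.
Qed.

Lemma mx3_mul (a11 a12 a13 a21 a22 a23 a31 a32 a33
               b11 b12 b13 b21 b22 b23 b31 b32 b33 : R) :
  mx3 a11 a12 a13 a21 a22 a23 a31 a32 a33 *m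
  mx3 b11 b12 b13 b21 b22 b23 b31 b32 b33 =
  mx3 (a11*b11+a12*b21+a13*b31) (a11*b12+a12*b22+a13*b32) (a11*b13+a12*b23+a13*b33)
      (a21*b11+a22*b21+a23*b31) (a21*b12+a22*b22+a23*b32) (a21*b13+a22*b23+a23*b33)
      (a31*b11+a32*b21+a33*b31) (a31*b12+a32*b22+a33*b32) (a31*b13+a32*b23+a33*b33).
Proof.
apply/matrixP => i j; rewrite !mxE !big_ord_recr big_ord0 /= !mxE.
by have [->|[->|->]] := ord3 i; have [->|[->|->]] := ord3 j; rewrite /= add0r.
Qed.

Lemma mx3_tr (a11 a12 a13 a21 a22 a23 a31 a32 a33 : R) :
  (mx3 a11 a12 a13 a21 a22 a23 a31 a32 a33)^T =
  mx3 a11 a21 a31 a12 a22 a32 a13 a23 a33.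
Proof.
apply/matrixP => i j; rewrite !mxE.
by have [->|[->|->]] := ord3 i; have [->|[->|->]] := ord3 j.
Qed.

Lemma qf3 (a11 a12 a13 a21 a22 a23 a31 a32 a33 x y z : R) :
  ((col3 x y z)^T *m mx3 a11 a12 a13 a21 a22 a23 a31 a32 a33 *m col3 x y z) 0 0 =
  x*(a11*x+a12*y+a13*z) + y*(a21*x+a22*y+a23*z) + z*(a31*x+a32*y+a33*z).
Proof.
rewrite !(mxE, big_ord_recr, big_ord0) /=. ring.
Qed.

Lemma col3_neq0 (x y z : R) : (x != 0) || (y != 0) || (z != 0) -> col3 x y z != 0.
Proof.
move=> H; apply/eqP => E; move: H.
have := congr1 (fun v : 'cV[R]_3 => v o0 0) E; have := congr1 (fun v : 'cV[R]_3 => v o1 0) E;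
have := congr1 (fun v : 'cV[R]_3 => v o2 0) E; rewrite !mxE /= => -> -> ->.
by rewrite eqxx.
Qed.

Lemma invmx_L (a b : R) : b != 0 ->
  invmx (mx3 1 0 0 0 1 0 0 a b) = mx3 1 0 0 0 1 0 0 (- a / b) (1 / b).
Proof.
move=> hb.
have H : mx3 1 0 0 0 1 0 0 a b *m mx3 1 0 0 0 1 0 0 (- a / b) (1 / b) = 1%:M.
  rewrite mx3_mul (mx3_eta 1%:M) !mxE /=; congr mx3; try field; done.
have [U _] := mulmx1_unit H.
by rewrite -[RHS]mul1mx -(mulVmx U) -mulmxA H mulmx1.
Qed.


Lemma pos3 (x0 x1 x2 be ga : R) : ga != 0 ->
  (x0 != 0) || (x1 != 0) || (x2 != 0) ->
  0 < x0 ^+ 2 + x1 ^+ 2 + (be * x1 + ga * x2) ^+ 2.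
Proof.
move=> hg H; rewrite lt_def; apply/andP; split; last by rewrite !addr_ge0 ?sqr_ge0.
rewrite !paddr_eq0 ?addr_ge0 ?sqr_ge0 // !sqrf_eq0.
apply/negP => /andP [/andP [/eqP e0 /eqP e1] /eqP e2]; move: H.
rewrite e0 e1 mulr0 add0r in e2 *; move/eqP: e2; rewrite mulf_eq0 (negPf hg) /= => ->.
by rewrite eqxx.
Qed.

Lemma col3_0 : col3 (0:R) 0 0 = 0.
Proof. apply/matrixP => i j; rewrite !mxE; by have [->|[->|->]] := ord3 i. Qed.

Lemma part1 (h : 'M[R]_3) : in_Lprime h -> inner_product (act h (ip0 R)).
Proof.
move=> [a [b [hb ->]]]; rewrite /act /ip0 invmx_L ?(lt0r_neq0 hb) // mulmx1 mx3_tr mx3_mul.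
split; first by rewrite mx3_tr; congr mx3; ring.
move=> x hx; rewrite (col3_eta x) qf3.
have H : (x o0 0 != 0) || (x o1 0 != 0) || (x o2 0 != 0).
  apply/negP => /negP; rewrite !negb_or !negbK => /andP [/andP [/eqP e0 /eqP e1] /eqP e2].
  by move: hx; rewrite (col3_eta x) e0 e1 e2 col3_0 eqxx.
have := @pos3 _ _ _ (- a / b) _ (invr_neq0 (lt0r_neq0 hb)) H.
rewrite !div1r.
set y0 := x o0 0; set y1 := x o1 0; set y2 := x o2 0.
move=> P; apply: (lt_le_trans P); rewrite le_eqVlt; apply/orP; left; apply/eqP; ring.
Qed.
Lemma gt0_eq (a b : R) : 0 < a -> a = b -> 0 < b.
Proof. by move=> h <-. Qed.

Lemma part2 (br : 'cV[R]_3 -> 'cV[R]_3 -> 'cV[R]_3)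
  (HF : forall X : 'M[R]_3, in_F X -> in_scalar_aut br X) (S : 'M[R]_3) :
  inner_product S ->
  exists h : 'M[R]_3, in_Lprime h /\ isom_up_to_scaling br S (act h (ip0 R)).
Proof.
move=> [HS Hpos].
have sym i j : S j i = S i j by rewrite -[in RHS]HS mxE.
have Hq x y z : (x != 0) || (y != 0) || (z != 0) ->
    0 < ((col3 x y z)^T *m S *m col3 x y z) 0 0.
  by move=> H; apply: Hpos; apply: col3_neq0.
clear Hpos; rewrite (mx3_eta S) (sym o0 o1) (sym o0 o2) (sym o1 o2) in Hq *.
clear HS sym.
have [u [u0 Eu]] : exists u, 0 < u /\ S o2 o2 = u ^+ 2.
  have := Hq 0 0 1; rewrite oner_neq0 orbT => /(_ isT) P.
  rewrite qf3 in P.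
  have P' : 0 < S o2 o2 by lra.
  exists (Num.sqrt (S o2 o2)); rewrite sqrtr_gt0 sqr_sqrtr //; exact: ltW.
rewrite Eu in Hq *.
have u0' : u != 0 by exact: lt0r_neq0.
have [t Et] : exists t, S o1 o2 = t * u by exists (S o1 o2 / u); field.
have [s Es] : exists s, S o0 o2 = s * u by exists (S o0 o2 / u); field.
rewrite Et Es in Hq *.
have [r [r0 Er]] : exists r, 0 < r /\ S o1 o1 = r ^+ 2 + t ^+ 2.
  have := Hq 0 u (- t); rewrite u0' orbT => /(_ isT) P.
  rewrite qf3 in P.
  have P' : 0 < u ^+ 2 * (S o1 o1 - t ^+ 2) by lra.
  have P'' : 0 < S o1 o1 - t ^+ 2 by move: P'; rewrite pmulr_rgt0 // exprn_gt0.
  exists (Num.sqrt (S o1 o1 - t ^+ 2)); rewrite sqrtr_gt0 sqr_sqrtr ?subrK //; exact: ltW.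
rewrite Er in Hq *.
have r0' : r != 0 by exact: lt0r_neq0.
have [q Eq] : exists q, S o0 o1 = q * r + s * t by exists ((S o0 o1 - s * t) / r); field.
rewrite Eq in Hq *.
have [p [p0 Ep]] : exists p, 0 < p /\ S o0 o0 = p ^+ 2 + q ^+ 2 + s ^+ 2.
  have := Hq 1 (- q / r) (- (s + t * (- q / r)) / u); rewrite oner_neq0 => /(_ isT) P.
  rewrite qf3 in P.
  have P' : 0 < S o0 o0 - q ^+ 2 - s ^+ 2.
    by apply: (gt0_eq P); field; rewrite u0' r0'.
  exists (Num.sqrt (S o0 o0 - q ^+ 2 - s ^+ 2)); rewrite sqrtr_gt0 sqr_sqrtr ?subrK; last exact: ltW.
  split=> //; ring.
rewrite Ep; clear Hq Ep Eq Er Et Es Eu.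
exists (mx3 1 0 0 0 1 0 0 (- t / u) (r / u)); split.
  by exists (- t / u), (r / u); split=> //; exact: divr_gt0.
pose X := mx3 p 0 0 q r 0 ((s - t * q / r) * r / u) 0 r.
have [c [f [c0 [fa EX]]]] : in_scalar_aut br X.
  by apply: HF; exists p, q, r, ((s - t * q / r) * r / u).
exists (c ^+ 2), f; split.
  by rewrite lt_def sqr_ge0 andbT sqrf_eq0.
split=> //.
have key : mx3 (p ^+ 2 + q ^+ 2 + s ^+ 2) (q * r + s * t) (s * u) (q * r + s * t)
    (r ^+ 2 + t ^+ 2) (t * u) (s * u) (t * u) (u ^+ 2) =
    X^T *m act (mx3 1 0 0 0 1 0 0 (- t / u) (r / u)) (ip0 R) *m X.
  have ru : r / u != 0 by rewrite mulf_neq0 ?invr_neq0.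
  rewrite /act /ip0 invmx_L // mulmx1 /X !mx3_tr !mx3_mul; congr mx3; field; rewrite ?u0' ?r0' ?ru ?mulf_neq0 ?invr_neq0 //.
rewrite key EX.
have -> : (c *: f)^T = c *: f^T by apply/matrixP => i j; rewrite !mxE.
by rewrite -scalemxAr -!scalemxAl scalerA expr2.
Qed.

End Aux.

Theorem lemma3p7 (R : realType) (br : 'cV[R]_3 -> 'cV[R]_3 -> 'cV[R]_3)
  (Hlie : is_lie_bracket br)
  (HF : forall X : 'M[R]_3, in_F X -> in_scalar_aut br X) :
  (forall h : 'M[R]_3, in_Lprime h -> inner_product (act h (ip0 R))) /\
  (forall S : 'M[R]_3, inner_product S ->
     exists h : 'M[R]_3, in_Lprime h /\ isom_up_to_scaling br S (act h (ip0 R))).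
Proof.
split; first exact: part1.
exact: part2.
Qed.
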